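(* Let $\alpha\in[0,1)$, $\beta>0$, and $h(p)=g_\alpha(1-e^{-\beta p})$ for $p\in[0,1]$. (i) (Extinction) If $(1-\alpha)\beta\le1$, then $\lim_{k\to\infty}h^k(p)=0$ for all $p\in[0,1]$. (ii) (Survival) If $(1-\alpha)\beta>1$, then $\liminf_{k\to\infty}h^k(p)>0$ for all $p\in(0,1)$.
   Context: For $\alpha\in(0,1)$ let $g_\alpha(x)=\frac{(1-\sqrt{1-4(1-\alpha)x(1-x)})^3}{8(1-\alpha)^2x^2}$ for $x\in(0,1]$ and $g_\alpha(0)=0$; let $g_0(x)=x$ for $x\le1/2$ and $g_0(x)=(1-x)^3/x^2$ for $x>1/2$. $h^k$ denotes the $k$-th iterate of $h$. *)

(* Defs.v *)
From Stdlib Require Import Reals Lra.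
Open Scope R_scope.

Definition g0 (x : R) : R :=
  if Rle_dec x (1/2) then x else (1 - x) ^ 3 / x ^ 2.

Definition gpos (alpha x : R) : R :=
  if Req_EM_T x 0 then 0
  else (1 - sqrt (1 - 4 * (1 - alpha) * x * (1 - x))) ^ 3
         / (8 * (1 - alpha) ^ 2 * x ^ 2).

Definition g (alpha x : R) : R :=
  if Req_EM_T alpha 0 then g0 x else gpos alpha x.

Definition h (alpha beta p : R) : R := g alpha (1 - exp (- (beta * p))).

Fixpoint iter (k : nat) (f : R -> R) (x : R) : R :=
  match k with
  | O => x
  | S k' => f (iter k' f x)
  end.

(* Main.v *)
Require Import Defs.
From Stdlib Require Import Reals.
Open Scope R_scope.
From Stdlib Require Import Lra Psatz Classical.
Lemma g_bounds alpha x : 0 <= alpha < 1 -> 0 < x < 1 ->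
  (1 - alpha) * x * (1 - x) ^ 3 <= g alpha x <= (1 - alpha) * x.
Proof.
  intros Ha Hx. unfold g.
  destruct (Req_EM_T alpha 0) as [E|E].
  - subst alpha. unfold g0. destruct (Rle_dec x (1/2)).
    + split; [|lra]. assert (0 <= x*(1-(1-x)^3)) by (apply Rmult_le_pos; nra). nra.
    + assert (Hx2: 0 < x^2) by nra.
      split.
      * apply (Rmult_le_reg_r (x^2)); auto. replace ((1 - x) ^ 3 / x ^ 2 * x ^ 2) with ((1-x)^3) by (field; lra).
        assert (0 <= (1-x)^3) by (apply pow_le; lra).
        assert (x^3 <= 1) by (replace 1 with (1^3) by ring; apply pow_incr; lra).
        replace ((1 - 0) * x * (1 - x) ^ 3 * x ^ 2) with (x^3 * (1-x)^3) by ring. nra.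
      * apply (Rmult_le_reg_r (x^2)); auto. replace ((1 - x) ^ 3 / x ^ 2 * x ^ 2) with ((1-x)^3) by (field; lra).
        assert (0 < 1-x < x) by lra.
        assert ((1-x)^3 <= x^3) by (apply pow_incr; lra). nra.
  - unfold gpos. destruct (Req_EM_T x 0) as [E2|E2]; [lra|].
    set (c := 1 - alpha). assert (Hc: 0 < c <= 1) by (unfold c; lra).
    replace (1 - alpha) with c by reflexivity. clearbody c.
    set (D := 1 - 4 * c * x * (1 - x)).
    assert (HD: 0 <= D <= 1).
    { unfold D. assert (0<=c*x*(1-x)) by (apply Rmult_le_pos; nra). assert (0<=x*(1-x)) by (apply Rmult_le_pos; lra). assert (0 <= (1-c)*(x*(1-x))) by (apply Rmult_le_pos; lra). assert (0 <= (2*x-1)^2) by (apply pow2_ge_0). split; nra. }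
    set (s := sqrt D).
    assert (Hs0: 0 <= s) by apply sqrt_pos.
    assert (Hss: s * s = D) by (apply sqrt_sqrt; lra).
    clearbody s. assert (Hs1: s <= 1) by nra.
    assert (Hup: 1 - s <= 2 * c * x).
    { destruct (Rle_dec (1 - 2*c*x) 0). lra.
      assert ((1-2*c*x)*(1-2*c*x) <= s * s) by (rewrite Hss; unfold D; nra). nra. }
    assert (Hlo: 2 * c * x * (1 - x) <= 1 - s).
    { assert ((1-s)*(1+s) = 4*c*x*(1-x)) by (unfold D in Hss; nra).
      assert (0 <= c*x*(1-x)) by (apply Rmult_le_pos; nra). nra. }
    assert (Hden: 0 < 8 * c ^ 2 * x ^ 2) by (assert (0 < c*x) by nra; nra).
    assert (Hq: 0 <= 2*c*x*(1-x)) by (assert (0 <= c*x*(1-x)) by (apply Rmult_le_pos; nra); nra).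
    split.
    + apply (Rmult_le_reg_r (8 * c ^ 2 * x ^ 2)); auto. replace ((1 - s) ^ 3 / (8 * c ^ 2 * x ^ 2) * (8 * c ^ 2 * x ^ 2)) with ((1-s)^3) by (field; lra).
      replace (c * x * (1 - x) ^ 3 * (8 * c ^ 2 * x ^ 2)) with ((2*c*x*(1-x))^3) by ring.
      apply pow_incr; lra.
    + apply (Rmult_le_reg_r (8 * c ^ 2 * x ^ 2)); auto. replace ((1 - s) ^ 3 / (8 * c ^ 2 * x ^ 2) * (8 * c ^ 2 * x ^ 2)) with ((1-s)^3) by (field; lra).
      replace (c * x * (8 * c ^ 2 * x ^ 2)) with ((2*c*x)^3) by ring.
      apply pow_incr; lra.
Qed.

Lemma g_zero alpha : g alpha 0 = 0.
Proof.
  unfold g, g0, gpos. destruct (Req_EM_T alpha 0).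
  - destruct (Rle_dec 0 (1/2)); [reflexivity|lra].
  - destruct (Req_EM_T 0 0); [reflexivity|lra].
Qed.

Lemma exp_le x y : x <= y -> exp x <= exp y.
Proof. intros [H|H]. apply Rlt_le, exp_increasing; auto. subst; lra. Qed.

Lemma h_zero alpha beta : h alpha beta 0 = 0.
Proof. unfold h. rewrite Rmult_0_r, Ropp_0, exp_0, Rminus_diag. apply g_zero. Qed.

Lemma x_range beta q : 0 < beta -> 0 < q -> 0 < 1 - exp (- (beta * q)) < 1.
Proof.
  intros Hb Hq. split.
  - assert (exp (- (beta*q)) < exp 0) by (apply exp_increasing; nra). rewrite exp_0 in H. lra.
  - pose proof (exp_pos (- (beta*q))). lra.
Qed.

Lemma h_bounds alpha beta q : 0 <= alpha < 1 -> 0 < beta -> 0 < q ->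
  (1 - alpha) * (1 - exp (- (beta * q))) * exp (- (3 * beta * q)) <= h alpha beta q
  <= (1 - alpha) * (1 - exp (- (beta * q))).
Proof.
  intros Ha Hb Hq. unfold h.
  pose proof (g_bounds alpha (1 - exp (- (beta * q))) Ha (x_range beta q Hb Hq)) as G.
  replace (exp (- (3 * beta * q))) with ((1 - (1 - exp (- (beta * q)))) ^ 3). lra.
  replace (- (3 * beta * q)) with (- (beta*q) + - (beta*q) + - (beta*q)) by ring.
  rewrite !exp_plus. ring.
Qed.

Theorem mainTheorem7 (alpha beta : R) :
  0 <= alpha < 1 -> 0 < beta ->
  ((1 - alpha) * beta <= 1 ->
     forall p, 0 <= p <= 1 -> Un_cv (fun k => iter k (h alpha beta) p) 0)
  /\
  (1 < (1 - alpha) * beta ->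
     forall p, 0 < p < 1 ->
       exists c, 0 < c /\ exists K : nat, forall k, (K <= k)%nat ->
         c <= iter k (h alpha beta) p).
Proof.
  intros Ha Hb. split.
  - intros Hcb p Hp.
    assert (Hup: forall q, 0 < q -> 0 <= h alpha beta q <= (1 - exp (- (beta * q))) / beta).
    { intros q Hq. pose proof (h_bounds alpha beta q Ha Hb Hq) as [H1 H2].
      pose proof (x_range beta q Hb Hq) as Hx.
      pose proof (exp_pos (- (3 * beta * q))).
      split.
      - assert (0 <= (1 - alpha) * (1 - exp (- (beta * q)))) by (apply Rmult_le_pos; lra).
        assert (0 <= (1 - alpha) * (1 - exp (- (beta * q))) * exp (- (3 * beta * q))) by (apply Rmult_le_pos; lra).
        lra.
      - apply (Rmult_le_reg_r beta); auto.
        replace ((1 - exp (- (beta * q))) / beta * beta) with (1 - exp (- (beta * q))) by (field; lra).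
        nra. }
    assert (Hdec: forall q, 0 < q -> (1 - exp (- (beta * q))) / beta <= q).
    { intros q Hq. pose proof (exp_ineq1_le (- (beta * q))).
      apply (Rmult_le_reg_r beta); auto.
      replace ((1 - exp (- (beta * q))) / beta * beta) with (1 - exp (- (beta * q))) by (field; lra).
      lra. }
    set (u := fun k => iter k (h alpha beta) p).
    assert (Hu: forall k, 0 <= u k <= 1 /\ u (S k) <= u k).
    { induction k as [|k IH].
      - unfold u; simpl. destruct (Req_dec p 0) as [E|E].
        + subst p. rewrite h_zero. lra.
        + assert (0 < p) by lra. pose proof (Hup p H). pose proof (Hdec p H). lra.
      - destruct IH as [[I1 I2] I3]. change (u (S (S k))) with (h alpha beta (u (S k))).
        change (u (S k)) with (h alpha beta (u k)) in *.
        assert (Hs: forall q, 0 <= q <= 1 -> 0 <= h alpha beta q <= q).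
        { intros q Hq. destruct (Req_dec q 0) as [E|E].
          + subst q. rewrite h_zero. lra.
          + assert (0 < q) by lra. pose proof (Hup q H). pose proof (Hdec q H). lra. }
        pose proof (Hs (u k) (conj I1 I2)).
        pose proof (Hs (h alpha beta (u k)) ltac:(lra)). lra. }
    assert (Hmono: forall N n, (N <= n)%nat -> u n <= u N).
    { intros N n Hn. induction Hn. lra. pose proof (Hu m) as [_ H]. lra. }
    intros eps Heps.
    destruct (Classical_Prop.classic (exists N, u N < eps)) as [[N HN]|HN].
    + exists N. intros n Hn. unfold R_dist. rewrite Rminus_0_r.
      pose proof (Hmono N n Hn). pose proof (Hu n) as [[? ?] _].
      rewrite Rabs_right by lra. lra.
    + exfalso.
      assert (Hge: forall n, eps <= u n).
      { intros n. destruct (Rle_dec eps (u n)); auto. exfalso. apply HN. exists n. lra. }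
      set (d := eps - (1 - exp (- (beta * eps))) / beta).
      assert (Hd: 0 < d).
      { unfold d. assert (- (beta*eps) <> 0) by nra.
        pose proof (exp_ineq1 _ H).
        assert ((1 - exp (- (beta * eps))) / beta < eps); [|lra].
        apply (Rmult_lt_reg_r beta); auto.
        replace ((1 - exp (- (beta * eps))) / beta * beta) with (1 - exp (- (beta * eps))) by (field; lra).
        lra. }
      assert (Hstep: forall q, eps <= q -> h alpha beta q <= q - d).
      { intros q Hq. assert (0 < q) by lra. pose proof (Hup q H) as [_ H1].
        assert ((1 - exp (- (beta * q))) / beta <= q - d); [|lra].
        unfold d. apply (Rmult_le_reg_r beta); auto.
        replace ((1 - exp (- (beta * q))) / beta * beta) with (1 - exp (- (beta * q))) by (field; lra).
        replace ((q - (eps - (1 - exp (- (beta * eps))) / beta)) * beta)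
          with (beta * (q - eps) + (1 - exp (- (beta * eps)))) by (field; lra).
        replace (- (beta * q)) with (- (beta * eps) + - (beta * (q - eps))) by ring.
        rewrite exp_plus.
        pose proof (exp_ineq1_le (- (beta * (q - eps)))).
        pose proof (exp_pos (- (beta * eps))).
        assert (exp (- (beta * eps)) <= 1).
        { rewrite <- exp_0. apply exp_le. nra. }
        assert (0 <= beta * (q - eps)) by nra.
        nra. }
      assert (Hlin: forall n, u n <= p - INR n * d).
      { induction n. change (u 0%nat) with p. simpl INR. lra. rewrite S_INR.
        change (u (S n)) with (h alpha beta (u n)). pose proof (Hstep (u n) (Hge n)). lra. }
      destruct (INR_unbounded (p / d)) as [n Hn].
      pose proof (Hlin n). pose proof (Hge n).
      assert (p < INR n * d).
      { apply (Rmult_lt_reg_r (/ d)). apply Rinv_0_lt_compat; auto.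
        replace (INR n * d * / d) with (INR n) by (field; lra). unfold Rdiv in Hn. lra. }
      lra.
  - intros Hcb p Hp.
    set (k := (1 - alpha) * beta). assert (Hkdef: k = (1 - alpha) * beta) by reflexivity. clearbody k.
    set (y0 := (k - 1) / (3 * k + 1)). assert (Hy0def: y0 = (k - 1) / (3 * k + 1)) by reflexivity. clearbody y0.
    assert (Hy0: 0 < y0 /\ (1 + y0) <= k * (1 - 3 * y0)).
    { rewrite Hy0def. split. apply Rdiv_lt_0_compat; lra.
      apply (Rmult_le_reg_r (3*k+1)). lra.
      replace ((1 + (k - 1) / (3 * k + 1)) * (3 * k + 1)) with (4 * k) by (field; lra).
      replace (k * (1 - 3 * ((k - 1) / (3 * k + 1))) * (3 * k + 1)) with (4 * k) by (field; lra).
      lra. }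
    set (q0 := y0 / beta).
    assert (Hq0: 0 < q0) by (apply Rdiv_lt_0_compat; lra).
    set (eta := (1 - alpha) * (1 - exp (- (beta * q0))) * exp (- (3 * beta))).
    assert (Heta: 0 < eta).
    { unfold eta. pose proof (x_range beta q0 Hb Hq0). pose proof (exp_pos (- (3*beta))).
      apply Rmult_lt_0_compat; auto. apply Rmult_lt_0_compat; lra. }
    assert (Hkey: forall q, 0 < q <= 1 -> Rmin q eta <= h alpha beta q /\ h alpha beta q < 1).
    { intros q Hq. pose proof (h_bounds alpha beta q Ha Hb (proj1 Hq)) as [H1 H2].
      pose proof (x_range beta q Hb (proj1 Hq)) as Hx.
      split; [|nra].
      destruct (Rle_dec q q0) as [Hs|Hs].
      - eapply Rle_trans. apply Rmin_l. eapply Rle_trans; [|apply H1].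
        set (y := beta * q).
        assert (Hy: 0 < y <= y0).
        { unfold y. split. nra. unfold q0 in Hs.
          apply (Rmult_le_compat_l beta) in Hs; [|lra].
          replace (beta * (y0 / beta)) with y0 in Hs by (field; lra). lra. }
        replace (3 * beta * q) with (3 * y) by (unfold y; ring).
        pose proof (exp_ineq1_le (- (3 * y))).
        pose proof (exp_ineq1_le y) as Ey.
        assert (Einv: exp (- y) * exp y = 1).
        { rewrite <- exp_plus. replace (- y + y) with 0 by ring. apply exp_0. }
        pose proof (exp_pos y). pose proof (exp_pos (- y)).
        assert (A: y <= (1 - exp (- y)) * (1 + y)) by nra.
        assert (B: 0 <= 1 - 3 * y) by (destruct Hy0; nra).
        assert (C: 1 - 3 * y <= exp (- (3 * y))) by lra.
        assert (q = y / beta) by (unfold y; field; lra).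
        assert (D: y <= k * (1 - exp (- y)) * (1 - 3 * y)).
        { assert (1 + y <= k * (1 - 3 * y)) by (destruct Hy0; nra).
          assert (0 <= 1 - exp (- y)) by nra.
          nra. }
        assert (y / beta <= (1 - alpha) * (1 - exp (- y)) * (1 - 3 * y)).
        { apply (Rmult_le_reg_r beta); auto.
          replace (y / beta * beta) with y by (field; lra). rewrite Hkdef in D. nra. }
        assert (0 <= (1 - alpha) * (1 - exp (- y))) by (apply Rmult_le_pos; nra).
        nra.
      - eapply Rle_trans. apply Rmin_r. eapply Rle_trans; [|apply H1].
        unfold eta.
        assert (E1: exp (- (beta * q)) <= exp (- (beta * q0))) by (apply exp_le; nra).
        assert (E2: exp (- (3 * beta)) <= exp (- (3 * beta * q))) by (apply exp_le; nra).
        pose proof (exp_pos (- (3 * beta))).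
        pose proof (x_range beta q0 Hb Hq0).
        assert (0 <= (1 - alpha) * (1 - exp (- (beta * q0)))) by (apply Rmult_le_pos; lra).
        assert ((1 - alpha) * (1 - exp (- (beta * q0))) <= (1 - alpha) * (1 - exp (- (beta * q))))
          by (apply Rmult_le_compat_l; lra).
        apply Rmult_le_compat; lra. }
    exists (Rmin p eta). split. apply Rmin_glb_lt; lra.
    exists 0%nat. intros n _.
    assert (Inv: forall n, 0 < iter n (h alpha beta) p <= 1 /\ Rmin p eta <= iter n (h alpha beta) p).
    { induction n0 as [|n0 IH].
      - simpl. split. lra. apply Rmin_l.
      - simpl. destruct IH as [I1 I2]. pose proof (Hkey _ I1) as [K1 K2].
        assert (Rmin p eta <= Rmin (iter n0 (h alpha beta) p) eta).
        { unfold Rmin at 2. destruct (Rle_dec (iter n0 (h alpha beta) p) eta); auto. apply Rmin_r. }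
        assert (0 < Rmin p eta) by (apply Rmin_glb_lt; lra).
        split; [split|]; lra. }
    apply Inv.
Qed.
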